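(* Let $k$ be a field of characteristic zero and $a,b\in k^{*}$ such that the quadratic form $\langle 1,-a\rangle\langle 1,b\rangle$ is anisotropic over $k$. Let $\mathcal{L}$ be a finite extension of $k(T)$, and let $\mathfrak{T}$ be a prime of $\mathcal{L}$ above $T$ which is unramified over $k(T)$ and whose residue field is $k$. Let $g\in k(T)^{*}$ be such that $\operatorname{ord}_T(g)$ is non-negative and even. Then at least one of the two quadratic forms $$q_1=\langle T,-aT,-1,-g\rangle\langle 1,b\rangle,\qquad q_2=\langle T,-aT,-1,-ag\rangle\langle 1,b\rangle$$ is anisotropic over $\mathcal{L}$.
   Context: $\langle c_1,\dots,c_n\rangle$ denotes the diagonal quadratic form $c_1x_1^2+\dots+c_nx_n^2$, and the product $\langle c_1,\dots,c_n\rangle\langle d_1,\dots,d_m\rangle$ denotes the tensor product form $\langle c_id_j\rangle_{i,j}$. A form is isotropic over a field if it has a nontrivial zero there, and anisotropic otherwise. A prime above $T$ is a place of $\mathcal{L}$ over the zero of $T$ in $k(T)$; $\operatorname{ord}_T$ is the normalized valuation of $k(T)$ at $T$. *)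

(* Defs.v *)
From HB Require Import structures.
From mathcomp Require Import all_boot all_order all_algebra all_field.
Set Implicit Arguments. Unset Strict Implicit. Unset Printing Implicit Defensive.
Import Order.TTheory GRing.Theory Num.Theory.
Local Open Scope ring_scope.

Notation ratfun k := {fraction {poly k}}.
Definition rf {k : fieldType} (p : {poly k}) : ratfun k := FracField.tofrac p.
Definition rfT (k : fieldType) : ratfun k := rf 'X.
Definition rfC {k : fieldType} (c : k) : ratfun k := rf c%:P.

Definition ordT_is {k : fieldType} (g : ratfun k) (n : int) : Prop :=
  exists p q : {poly k}, [/\ p.[0] != 0, q.[0] != 0 &
     g = rf p / rf q * (rfT k) ^ n].

(* Diagonal quadratic forms <c_1,...,c_n> as sequences of coefficients. *)
Definition qf_tensor {F : fieldType} (s t : seq F) : seq F :=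
  [seq c * d | c <- s, d <- t].

Definition isotropic {F : fieldType} (s : seq F) : Prop :=
  exists x : 'I_(size s) -> F,
    (exists i, x i != 0) /\ \sum_(i < size s) s`_i * x i ^+ 2 = 0.

Definition anisotropic {F : fieldType} (s : seq F) : Prop := ~ isotropic s.

(* A normalized discrete valuation on a field L (values on L^*, w 0 irrelevant). *)
Definition discrete_valuation {L : fieldType} (w : L -> int) : Prop :=
  [/\ forall x y, x != 0 -> y != 0 -> w (x * y) = w x + w y,
      forall x y, x != 0 -> y != 0 -> x + y != 0 ->
        Order.min (w x) (w y) <= w (x + y)
    & exists x, x != 0 /\ w x = 1].

(* A prime of L above T, unramified over k(T): w restricts to ord_T on k(T)
   (ramification index 1). *)
Definition unramified_prime_above_T {k : fieldType}
    {L : fieldExtType (ratfun k)} (w : L -> int) : Prop :=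
  discrete_valuation w /\
  forall (g : ratfun k) (n : int), g != 0 -> ordT_is g n -> w (g%:A) = n.

(* The residue field of w is k: every w-integral element is congruent to
   (the image of) a constant of k modulo the maximal ideal. *)
Definition residue_field_is_k {k : fieldType}
    {L : fieldExtType (ratfun k)} (w : L -> int) : Prop :=
  forall x : L, x != 0 -> 0 <= w x ->
    exists c : k, x = (rfC c)%:A \/ (x - (rfC c)%:A != 0 /\ 0 < w (x - (rfC c)%:A)).

(* Main.v *)
Require Import Defs.
From HB Require Import structures.
From mathcomp Require Import all_boot all_order all_algebra all_field.
From mathcomp Require Import zify ring lra.
From Stdlib Require Import Classical.
Import Order.TTheory GRing.Theory Num.Theory.
Local Open Scope ring_scope.

Section Val.
Variables (k : fieldType) (L : fieldExtType (ratfun k)) (w : L -> int).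
Hypothesis hw : unramified_prime_above_T w.

Definition posv (y : L) := y = 0 \/ 0 < w y.
Definition intg (y : L) := y = 0 \/ 0 <= w y.

Lemma wM {x y} : x != 0 -> y != 0 -> w (x * y) = w x + w y.
Proof. by case: hw => -[h _ _] _; apply: h. Qed.

Lemma w1 : w 1 = 0.
Proof. have := wM (oner_neq0 L) (oner_neq0 L); rewrite mulr1 => h. by apply: (addrI (w 1)); rewrite addr0 -h. Qed.

Lemma wNone : w (-1) = 0.
Proof.
have h : (-1 : L) != 0 by rewrite oppr_eq0 oner_neq0.
have := wM h h; rewrite mulrNN mulr1 w1; lia.
Qed.

Lemma wN x : x != 0 -> w (- x) = w x.
Proof.
move=> hx; have h : (-1 : L) != 0 by rewrite oppr_eq0 oner_neq0.
by rewrite -mulN1r wM // wNone add0r.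
Qed.

Lemma wV x : x != 0 -> w (x^-1) = - w x.
Proof.
move=> hx; have := wM hx (invr_neq0 hx); rewrite mulfV // w1; lia.
Qed.

Lemma posv0 : posv 0. Proof. by left. Qed.
Lemma intg0 : intg 0. Proof. by left. Qed.

Lemma posvN x : posv x -> posv (- x).
Proof.
case=> [->|h]; first by rewrite oppr0; left.
have [->|nz] := eqVneq x 0; first by rewrite oppr0; left.
by right; rewrite wN.
Qed.

Lemma posvD x y : posv x -> posv y -> posv (x + y).
Proof.
case=> [->|hx]; first by rewrite add0r.
case=> [->|hy]; first by rewrite addr0; right.
have [->|nx] := eqVneq x 0; first by rewrite add0r; right.
have [->|ny] := eqVneq y 0; first by rewrite addr0; right.
have [->|nxy] := eqVneq (x + y) 0; first by left.
right; case: hw => -[_ hu _] _; apply: lt_le_trans (hu _ _ nx ny nxy).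
by rewrite lt_min hx hy.
Qed.

Lemma intgD x y : intg x -> intg y -> intg (x + y).
Proof.
case=> [->|hx]; first by rewrite add0r.
case=> [->|hy]; first by rewrite addr0; right.
have [->|nx] := eqVneq x 0; first by rewrite add0r; right.
have [->|ny] := eqVneq y 0; first by rewrite addr0; right.
have [->|nxy] := eqVneq (x + y) 0; first by left.
right; case: hw => -[_ hu _] _; apply: le_trans (hu _ _ nx ny nxy).
by rewrite le_min hx hy.
Qed.

Lemma intgM x y : intg x -> intg y -> intg (x * y).
Proof.
have [->|nx] := eqVneq x 0; first by rewrite mul0r; left.
have [->|ny] := eqVneq y 0; first by rewrite mulr0; left.
case=> [/eqP|hx]; first by rewrite (negbTE nx).
case=> [/eqP|hy]; first by rewrite (negbTE ny).
by right; rewrite wM // addr_ge0.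
Qed.

Lemma posvM x y : intg x -> posv y -> posv (x * y).
Proof.
have [->|nx] := eqVneq x 0; first by rewrite mul0r; left.
have [->|ny] := eqVneq y 0; first by rewrite mulr0; left.
case=> [/eqP|hx]; first by rewrite (negbTE nx).
case=> [/eqP|hy]; first by rewrite (negbTE ny).
by right; rewrite wM // ltr_wpDl.
Qed.

Lemma posv_intg x : posv x -> intg x.
Proof. by case=> [->|h]; [left|right; apply: ltW]. Qed.

Lemma posv_sum (I : finType) (P : pred I) (F : I -> L) :
  (forall i, P i -> posv (F i)) -> posv (\sum_(i | P i) F i).
Proof.
move=> h; apply: (big_ind posv) => //; [exact: posv0 | exact: posvD].
Qed.


Definition iA (c : ratfun k) : L := in_alg L c.
Definition Cc (c : k) : L := iA (rfC c).

Lemma iA_eq0 c : (iA c == 0) = (c == 0).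
Proof. exact: fmorph_eq0. Qed.

Lemma rfT_neq0 : rfT k != 0.
Proof. by rewrite /rfT /rf tofrac_eq0 polyX_eq0. Qed.

Lemma wiA g n : g != 0 -> ordT_is g n -> w (iA g) = n.
Proof. by case: hw => _ h; apply: h. Qed.

Lemma wTz z : w (iA (rfT k ^ z)) = z.
Proof.
apply: wiA; first by rewrite expfz_neq0 // rfT_neq0.
exists 1, 1; rewrite !hornerC oner_neq0; split => //.
by rewrite /rf tofrac1 divr1 mul1r.
Qed.

Lemma wT : w (iA (rfT k)) = 1.
Proof. by rewrite -(wTz 1) expr1z. Qed.

Lemma wC {c} : c != 0 -> w (Cc c) = 0.
Proof.
move=> hc; apply: wiA; first by rewrite /rfC /rf tofrac_eq0 polyC_eq0.
exists c%:P, 1; rewrite !hornerC oner_neq0 hc; split => //.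
by rewrite /rf tofrac1 divr1 expr0z mulr1.
Qed.

Lemma CcD c d : Cc (c + d) = Cc c + Cc d.
Proof. by rewrite /Cc /iA /rfC /rf polyCD tofracD rmorphD. Qed.
Lemma CcM c d : Cc (c * d) = Cc c * Cc d.
Proof. by rewrite /Cc /iA /rfC /rf polyCM tofracM rmorphM. Qed.
Lemma CcN c : Cc (- c) = - Cc c.
Proof. by rewrite /Cc /iA /rfC /rf polyCN tofracN rmorphN. Qed.
Lemma Cc0 : Cc 0 = 0.
Proof. by rewrite /Cc /iA /rfC /rf tofrac0 rmorph0. Qed.
Lemma Cc1 : Cc 1 = 1.
Proof. by rewrite /Cc /iA /rfC /rf tofrac1 rmorph1. Qed.
Lemma Cc_eq0 c : (Cc c == 0) = (c == 0).
Proof. by rewrite /Cc iA_eq0 /rfC /rf tofrac_eq0 polyC_eq0. Qed.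
Lemma Cc_sum (I : finType) (P : pred I) (F : I -> k) :
  Cc (\sum_(i | P i) F i) = \sum_(i | P i) Cc (F i).
Proof. exact: (big_morph Cc CcD Cc0). Qed.

Lemma intgC c : intg (Cc c).
Proof.
have [->|hc] := eqVneq c 0; first by rewrite Cc0; left.
by right; rewrite wC.
Qed.

Lemma unit_add {u r} : u != 0 -> w u = 0 -> posv r -> u + r != 0 /\ w (u + r) = 0.
Proof.
move=> hu wu [->|hr]; first by rewrite addr0.
have [->|nr] := eqVneq r 0; first by rewrite addr0.
have nur : u + r != 0.
  apply/eqP => h; move: hr; rewrite (_ : r = - u); last by apply/eqP; rewrite -addr_eq0 addrC h.
  by rewrite wN // wu ltxx.
split => //.
case: hw => -[_ hu' _] _.
have h1 := hu' _ _ hu nr nur; rewrite wu in h1.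
have nNr : - r != 0 by rewrite oppr_eq0.
have := hu' _ _ nur nNr; rewrite addrK // wN // wu => h2.
apply/eqP; rewrite eq_le.
case: (leP (w (u + r)) (w r)) h2 => [hle|hlt] h2; last by have := h2 hu; rewrite leNgt hr.
by rewrite (h2 hu) /= -(min_idPl (ltW hr)).
Qed.

Hypothesis hres : residue_field_is_k w.

Lemma residue {y} : intg y -> exists c, posv (y - Cc c) /\ (y != 0 -> w y = 0 -> c != 0).
Proof.
have [->|ny] := eqVneq y 0; first by move=> _; exists 0; rewrite Cc0 subr0; split => //; left.
case=> [/eqP|hy]; first by rewrite (negbTE ny).
have [c [hc|[hc1 hc2]]] := hres y ny hy; exists c.
  by split; [left; rewrite hc subrr | move=> _ _; apply: contra_neq ny => c0; rewrite hc; change (Cc c = 0); rewrite c0 Cc0].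
split; first by right.
move=> _ wy; have hc3 : 0 < w (y - Cc c) := hc2; apply: contraTneq hc3 => ->; by rewrite Cc0 subr0 wy ltxx.
Qed.

Definition tp (z : int) : L := iA (rfT k ^ z).

Lemma tpD a b : tp (a + b) = tp a * tp b.
Proof. by rewrite /tp /iA expfzDr ?rfT_neq0 // rmorphM. Qed.
Lemma tp0 : tp 0 = 1.
Proof. by rewrite /tp /iA expr0z rmorph1. Qed.
Lemma tp_neq0 z : tp z != 0.
Proof. by rewrite /tp iA_eq0 expfz_neq0 // rfT_neq0. Qed.
Lemma wtp z : w (tp z) = z.
Proof. exact: wTz. Qed.

Lemma arith (a b : bool) (u v : int) : a != b -> Posz b + 2 * v <= Posz a + 2 * u ->
  0 < Posz a - Posz b + 0 + ((u - v) + (u - v)).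
Proof. by case: a; case: b => //= _; lia. Qed.

Lemma springer n (eps : 'I_n -> bool) (d : 'I_n -> L) (db : 'I_n -> k) (x : 'I_n -> L) :
  (forall i, db i != 0) -> (forall i, posv (d i - Cc (db i))) ->
  (exists i, x i != 0) ->
  \sum_i (if eps i then tp 1 else 1) * d i * x i ^+ 2 = 0 ->
  exists p : bool, exists e : 'I_n -> k,
    [/\ exists i, e i != 0, forall i, eps i != p -> e i = 0 & \sum_i db i * e i ^+ 2 = 0].
Proof.
move=> hdb hd [i0 hi0] hsum.
have wd i : d i != 0 /\ w (d i) = 0.
  have h1 : Cc (db i) != 0 by rewrite Cc_eq0.
  have := unit_add h1 (wC (hdb i)) (hd i).
  by rewrite addrC subrK.
pose val i : int := Posz (eps i) + 2 * w (x i).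
have [im him hmin] := @arg_minP _ _ _ i0 (fun i => x i != 0) val hi0.
set p := eps im; set j := w (x im).
pose y i := x i * tp (- j).
pose t i := tp (Posz (eps i) - Posz p) * d i * y i ^+ 2.
have tE i : t i = tp (- Posz p - 2 * j) * ((if eps i then tp 1 else 1) * d i * x i ^+ 2).
  have -> : (if eps i then tp 1 else 1) = tp (Posz (eps i)) by case: (eps i); rewrite ?tp0.
  have H : tp (Posz (eps i) - Posz p) * (tp (- j) * tp (- j)) = tp (- Posz p - 2 * j) * tp (Posz (eps i)).
    by rewrite -!tpD; congr tp; lia.
  have -> : t i = tp (Posz (eps i) - Posz p) * (tp (- j) * tp (- j)) * (d i * x i ^+ 2).
    by rewrite /t /y; ring.
  by rewrite H; ring.
have tsum : \sum_i t i = 0 by rewrite (eq_bigr _ (fun i _ => tE i)) -mulr_sumr hsum mulr0.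
have wy i : x i != 0 -> y i != 0 /\ w (y i) = w (x i) - j.
  move=> nx; have ny : y i != 0 by rewrite mulf_neq0 ?tp_neq0.
  by split => //; rewrite wM ?tp_neq0 // wtp.
have ineq i : x i != 0 -> val im <= val i by move=> nx; apply: hmin.
have tpos i : eps i != p -> posv (t i).
  move=> ne; have [x0|nx] := eqVneq (x i) 0.
    by left; rewrite /t /y x0 mul0r expr0n mulr0.
  have [ny wyi] := wy i nx; have [nd wdi] := wd i.
  right; rewrite /t expr2 !wM ?mulf_neq0 ?tp_neq0 // !wtp wdi.
  exact: arith ne (ineq i nx).
have yint i : eps i = p -> intg (y i).
  move=> ep; have [x0|nx] := eqVneq (x i) 0; first by left; rewrite /y x0 mul0r.
  right; have [_ ->] := wy i nx; have := ineq i nx; rewrite /val -/p -/j ep.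
  lia.
have yim : y im != 0 /\ w (y im) = 0 by rewrite (proj2 (wy im him)) subrr; split => //; apply: (proj1 (wy im him)).
have ex_e i : exists c : k, (eps i = p -> posv (y i - Cc c) /\ (y i != 0 -> w (y i) = 0 -> c != 0)) /\ (eps i != p -> c = 0).
  have [ep|ne] := eqVneq (eps i) p; last by exists 0; split => // /eqP; rewrite (negbTE ne).
  by have [c hc] := residue (yint i ep); exists c; split.
have [e he] := fin_all_exists ex_e.
exists p, e; split.
- exists im; have [h _] := he im; have [_ h2] := h erefl; exact: h2 (proj1 yim) (proj2 yim).
- by move=> i ne; apply: (proj2 (he i)).
have decomp i : posv (t i - Cc (db i * e i ^+ 2)).
  have [ep|ne] := eqVneq (eps i) p; last by rewrite (proj2 (he i) ne) expr0n mulr0 Cc0 subr0; apply: tpos.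
  have [hr _] := proj1 (he i) ep.
  have -> : t i - Cc (db i * e i ^+ 2) = (d i - Cc (db i)) * y i ^+ 2 + Cc (db i) * ((y i + Cc (e i)) * (y i - Cc (e i))).
    by rewrite /t ep subrr tp0 mul1r CcM expr2 CcM; ring.
  apply: posvD; first by rewrite mulrC; apply: posvM => //; rewrite expr2; apply: intgM; apply: yint.
  apply: posvM; first exact: intgC.
  by apply: posvM => //; apply: intgD; [apply: yint | apply: intgC].
have hC : posv (Cc (\sum_i db i * e i ^+ 2)).
  rewrite Cc_sum; have -> : \sum_i Cc (db i * e i ^+ 2) = - \sum_i (t i - Cc (db i * e i ^+ 2)).
    by rewrite sumrB tsum sub0r opprK.
  by apply: posvN; apply: posv_sum => i _; apply: decomp.
apply/eqP; apply: contraT => ns.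
case: hC => [/eqP|]; first by rewrite Cc_eq0 (negbTE ns).
by rewrite wC // ltxx.
Qed.


Lemma hres_lem (p q : {poly k}) : p.[0] != 0 -> q.[0] != 0 ->
  posv (iA (rf p / rf q) - Cc (p.[0] / q.[0])).
Proof.
move=> p0 q0; set c := p.[0] / q.[0].
have qn : q != 0 by apply: contraNneq q0 => ->; rewrite horner0.
have rqn : rf q != 0 by rewrite /rf tofrac_eq0.
rewrite /Cc /iA -rmorphB.
set r := rf p / rf q - rfC c.
have [->|rn] := eqVneq r 0; first by left; rewrite rmorph0.
pose Np := p - q * c%:P.
have Np0 : Np.[0] = 0 by rewrite /Np hornerD hornerN hornerM hornerC /c mulrC divfK // subrr.
have rE : r = rf Np / rf q.
  rewrite /r /Np /rfC /rf tofracB tofracM mulrBl mulrAC (divff rqn) mul1r. reflexivity.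
have Nn : Np != 0 by apply: contraNneq rn => h; rewrite rE h /rf tofrac0 mul0r.
have [m [N2 hN2 NE]] := multiplicity_XsubC Np 0.
rewrite Nn /= in hN2.
have mpos : (0 < m)%N.
  case: m NE => // NE; move: Np0; rewrite NE expr0 mulr1 => h.
  by move: hN2; rewrite /root h eqxx.
right; have -> : w (in_alg L r) = Posz m; last by [].
apply: (wiA _ _ rn); exists N2, q; split => //.
rewrite rE NE /rf tofracM polyC0 subr0 tofracXn -exprnP /rfT /rf. by rewrite mulrAC.
Qed.

End Val.
Arguments posv {k L} w y.
Arguments intg {k L} w y.
Arguments Cc {k} L c.
Arguments tp {k} L z.
Arguments iA {k} L c.

Lemma aniso4 {k : fieldType} {a b : k} :
  anisotropic (qf_tensor [:: 1; - a] [:: 1; b]) ->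
  forall y1 y2 y3 y4 : k, y1 ^+ 2 + b * y2 ^+ 2 - a * y3 ^+ 2 - a * b * y4 ^+ 2 = 0 ->
  [/\ y1 = 0, y2 = 0, y3 = 0 & y4 = 0].
Proof.
move=> hanis y1 y2 y3 y4 hs.
have [z1|n1] := eqVneq y1 0; have [z2|n2] := eqVneq y2 0;
have [z3|n3] := eqVneq y3 0; have [z4|n4] := eqVneq y4 0; try by [].
all: exfalso; apply: hanis; exists (fun i : 'I_4 => nth 0 [:: y1; y2; y3; y4] i); split;
  [ | rewrite !big_ord_recl big_ord0 /=; apply: (etrans _ hs); ring].
all: first [ by exists (Ordinal (isT : 0 < 4))%N | by exists (Ordinal (isT : 1 < 4))%N
           | by exists (Ordinal (isT : 2 < 4))%N | by exists (Ordinal (isT : 3 < 4))%N ].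
Qed.

Lemma eq_by {k : fieldType} {x y s : k} : x - y = s -> s = 0 -> x = y.
Proof. by move=> h s0; apply/eqP; rewrite -subr_eq0 h s0. Qed.

Lemma final (k : fieldType) (a b c : k) : a != 0 -> c != 0 ->
  anisotropic (qf_tensor [:: 1; - a] [:: 1; b]) ->
  forall e1 e2 e3 e4 f1 f2 f3 f4 : k,
  [|| e1 != 0, e2 != 0, e3 != 0 | e4 != 0] ->
  [|| f1 != 0, f2 != 0, f3 != 0 | f4 != 0] ->
  (-1) * e1 ^+ 2 + (-b) * e2 ^+ 2 + (- c) * e3 ^+ 2 + (- c * b) * e4 ^+ 2 = 0 ->
  (-1) * f1 ^+ 2 + (-b) * f2 ^+ 2 + (- (a * c)) * f3 ^+ 2 + (- (a * c) * b) * f4 ^+ 2 = 0 ->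
  False.
Proof.
move=> ha hc hanis e1 e2 e3 e4 f1 f2 f3 f4 ne nf E F.
pose N x y := x ^+ 2 + b * y ^+ 2.
have A2 x y : N x y = 0 -> x = 0 /\ y = 0.
  move=> h; have e0 : x ^+ 2 + b * y ^+ 2 - a * 0 ^+ 2 - a * b * 0 ^+ 2 = 0.
    by apply: (eq_by _ h); rewrite /N; ring.
  by have [] := aniso4 hanis x y 0 0 e0.
have NE : N e1 e2 = - c * N e3 e4 by apply/esym; apply: (eq_by _ E); rewrite /N; ring.
have NF : N f1 f2 = - (a * c) * N f3 f4 by apply/esym; apply: (eq_by _ F); rewrite /N; ring.
have Ne12 : N e1 e2 != 0.
  apply/eqP => h; have [z1 z2] := A2 _ _ h.
  have : N e3 e4 = 0.
    by move: NE; rewrite h => /esym/eqP; rewrite mulf_eq0 oppr_eq0 (negbTE hc) => /eqP.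
  by case/A2 => z3 z4; move: ne; rewrite z1 z2 z3 z4 eqxx.
have Nf34 : N f3 f4 != 0.
  apply/eqP => h; have [z3 z4] := A2 _ _ h.
  have : N f1 f2 = 0 by rewrite NF h mulr0.
  by case/A2 => z1 z2; move: nf; rewrite z1 z2 z3 z4 eqxx.
pose P1 := f3 * e1 - b * f4 * e2; pose P2 := f3 * e2 + f4 * e1.
pose Q1 := f1 * e3 - b * f2 * e4; pose Q2 := f1 * e4 + f2 * e3.
have NP : N P1 P2 = N f3 f4 * N e1 e2 by rewrite /N /P1 /P2; ring.
have NQ : N Q1 Q2 = N f1 f2 * N e3 e4 by rewrite /N /Q1 /Q2; ring.
have key : Q1 ^+ 2 + b * Q2 ^+ 2 - a * P1 ^+ 2 - a * b * P2 ^+ 2 = 0.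
  have -> : Q1 ^+ 2 + b * Q2 ^+ 2 - a * P1 ^+ 2 - a * b * P2 ^+ 2 = N Q1 Q2 - a * N P1 P2.
    by rewrite /N; ring.
  by rewrite NP NQ NF NE; ring.
have [_ _ z1 z2] := aniso4 hanis _ _ _ _ key.
by move: NP; rewrite z1 z2 /N expr0n /= mulr0 addr0 => /esym/eqP; rewrite mulf_eq0 (negbTE Nf34) (negbTE Ne12).
Qed.

Definition o8 (j : nat) (h : (j < 8)%N) : 'I_8 := Ordinal h.

Lemma sum8 (R : zmodType) (F : 'I_8 -> R) :
  \sum_(i < 8) F i = F (@o8 0 isT) + F (@o8 1 isT) + F (@o8 2 isT) + F (@o8 3 isT)
    + F (@o8 4 isT) + F (@o8 5 isT) + F (@o8 6 isT) + F (@o8 7 isT).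
Proof.
rewrite !big_ord_recl big_ord0 addr0 !addrA.
by repeat congr (_ + _); congr F; apply: val_inj.
Qed.

Lemma ord8_cases (P : 'I_8 -> Prop) :
  P (@o8 0 isT) -> P (@o8 1 isT) -> P (@o8 2 isT) -> P (@o8 3 isT) ->
  P (@o8 4 isT) -> P (@o8 5 isT) -> P (@o8 6 isT) -> P (@o8 7 isT) -> forall i, P i.
Proof.
move=> h0 h1 h2 h3 h4 h5 h6 h7 [[|[|[|[|[|[|[|[|//]]]]]]]] pf];
  by rewrite (bool_irrelevance pf isT).
Qed.

Section Res.
Variables (k : fieldType) (L : fieldExtType (ratfun k)) (w : L -> int).
Hypothesis hw : unramified_prime_above_T w.
Hypothesis hres : residue_field_is_k w.

Lemma iso_res (a b : k) (Hh : L) (c' : k) (m : nat) :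
  a != 0 -> b != 0 -> c' != 0 -> posv w (Hh - Cc L c') ->
  anisotropic (qf_tensor [:: 1; - a] [:: 1; b]) ->
  isotropic (qf_tensor [:: tp L 1; - (Cc L a * tp L 1); -1; - (Hh * (tp L m * tp L m))] [:: 1; Cc L b]) ->
  exists e1 e2 e3 e4 : k, [|| e1 != 0, e2 != 0, e3 != 0 | e4 != 0] /\
    (-1) * e1 ^+ 2 + (-b) * e2 ^+ 2 + (- c') * e3 ^+ 2 + (- c' * b) * e4 ^+ 2 = 0.
Proof.
move=> ha hb hc hH hanis [x [[i0 hi0] hs]].
pose x8 : 'I_8 -> L := x.
have hs8 : \sum_(i < 8) (qf_tensor [:: tp L 1; - (Cc L a * tp L 1); -1; - (Hh * (tp L m * tp L m))] [:: 1; Cc L b])`_i * x8 i ^+ 2 = 0 := hs.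
pose eps := fun i : 'I_8 => (i < 4)%N.
pose dl : seq L := [:: 1; Cc L b; - Cc L a; - Cc L a * Cc L b; -1; - Cc L b; - Hh; - Hh * Cc L b].
pose dbl : seq k := [:: 1; b; -a; -a*b; -1; -b; -c'; -c'*b].
pose xx := fun i : 'I_8 => if (i < 6)%N then x8 i else tp L m * x8 i.
have h1 : forall i : 'I_8, dbl`_i != 0.
  apply: ord8_cases => /=; rewrite ?oppr_eq0 ?mulf_neq0 ?oner_neq0 ?oppr_eq0 //.
have h2 : forall i : 'I_8, posv w (dl`_i - Cc L dbl`_i).
  apply: ord8_cases => /=.
  all: try by rewrite ?CcM ?CcN ?Cc1 subrr; left.
  + have -> : - Hh - Cc L (- c') = - (Hh - Cc L c') by rewrite CcN; ring.
    exact: posvN.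
  + have -> : - Hh * Cc L b - Cc L (- c' * b) = Cc L b * - (Hh - Cc L c') by rewrite CcM CcN; ring.
    by apply: posvM => //; [apply: intgC | apply: posvN].
have h3 : exists i, xx i != 0.
  exists i0; rewrite /xx; case: ifP => _ //; by rewrite mulf_neq0 // tp_neq0.
have h4 : \sum_i (if eps i then tp L 1 else 1) * dl`_i * xx i ^+ 2 = 0.
  rewrite sum8 /xx /=; move: hs8; rewrite sum8 /qf_tensor /= => hs8.
  by apply: (etrans _ hs8); ring.
have [p [e [[ie hie] hz hsum]]] := @springer k L w hw hres 8 eps (fun i => dl`_i) (fun i => dbl`_i) xx h1 h2 h3 h4.
rewrite sum8 /= in hsum.
have nz : [|| e (@o8 0 isT) != 0, e (@o8 1 isT) != 0, e (@o8 2 isT) != 0, e (@o8 3 isT) != 0,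
   e (@o8 4 isT) != 0, e (@o8 5 isT) != 0, e (@o8 6 isT) != 0 | e (@o8 7 isT) != 0].
  move: ie hie; apply: ord8_cases => ->; rewrite ?orbT //.
case: p hz => hz.
- have z4 := hz (@o8 4 isT) erefl; have z5 := hz (@o8 5 isT) erefl.
  have z6 := hz (@o8 6 isT) erefl; have z7 := hz (@o8 7 isT) erefl.
  rewrite z4 z5 z6 z7 eqxx /= !orbF in nz.
  have eq0 : e (@o8 0 isT) ^+ 2 + b * e (@o8 1 isT) ^+ 2 - a * e (@o8 2 isT) ^+ 2 - a * b * e (@o8 3 isT) ^+ 2 = 0.
    by apply: (etrans _ hsum); rewrite z4 z5 z6 z7; ring.
  have [y0 y1 y2 y3] := aniso4 hanis _ _ _ _ eq0.
  by move: nz; rewrite y0 y1 y2 y3 eqxx.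
- have z0 := hz (@o8 0 isT) erefl; have z1 := hz (@o8 1 isT) erefl.
  have z2 := hz (@o8 2 isT) erefl; have z3 := hz (@o8 3 isT) erefl.
  rewrite z0 z1 z2 z3 eqxx /= in nz.
  exists (e (@o8 4 isT)), (e (@o8 5 isT)), (e (@o8 6 isT)), (e (@o8 7 isT)); split => //.
  apply: (etrans _ hsum); rewrite z0 z1 z2 z3; ring.
Qed.
End Res.

Theorem lemma6p1 (k : fieldType) (a b : k)
  (hchar : [pchar k] =i pred0)
  (ha : a != 0) (hb : b != 0)
  (hanis : anisotropic (qf_tensor [:: 1; - a] [:: 1; b]))
  (L : fieldExtType (ratfun k)) (w : L -> int)
  (hw : unramified_prime_above_T w) (hres : residue_field_is_k w)
  (g : ratfun k) (hg : g != 0) (hord : exists m : nat, ordT_is g (2 * m)%:Z) :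
  let iL := fun c : ratfun k => (c%:A : L) in
  let T := iL (rfT k) in
  let a' := iL (rfC a) in
  let b' := iL (rfC b) in
  let g' := iL g in
  anisotropic (qf_tensor [:: T; - (a' * T); -1; - g'] [:: 1; b']) \/
  anisotropic (qf_tensor [:: T; - (a' * T); -1; - (a' * g')] [:: 1; b']).
Proof.
move=> iL T a' b' g'.
have [m [p [q [p0 q0 gE]]]] := hord.
set c := p.[0] / q.[0].
have cn : c != 0 by rewrite /c mulf_neq0 // invr_eq0.
pose H : L := iA L (rf p / rf q).
have hH : posv w (H - Cc L c) := @hres_lem k L w hw p q p0 q0.
have TE : T = tp L 1 by rewrite /tp expr1z.
have aE : a' = Cc L a := erefl.
have bE : b' = Cc L b := erefl.
have gE' : g' = H * (tp L m * tp L m).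
  rewrite -tpD /tp /H /iA -rmorphM /g' /iL gE.
  have -> : (m%:Z + m%:Z) = ((2 * m)%N)%:Z by lia.
  by [].
case: (classic (isotropic (qf_tensor [:: T; - (a' * T); -1; - g'] [:: 1; b']))) => iso1; last by left.
right => iso2.
rewrite TE aE bE gE' in iso1 iso2.
have [e1 [e2 [e3 [e4 [ne E]]]]] := @iso_res k L w hw hres a b H c m ha hb cn hH hanis iso1.
rewrite mulrA in iso2.
have hH2 : posv w (Cc L a * H - Cc L (a * c)).
  have -> : Cc L a * H - Cc L (a * c) = Cc L a * (H - Cc L c) by rewrite CcM; ring.
  by apply: posvM => //; apply: intgC.
have acn : a * c != 0 by rewrite mulf_neq0.
have [f1 [f2 [f3 [f4 [nf F]]]]] := @iso_res k L w hw hres a b (Cc L a * H) (a * c) m ha hb acn hH2 hanis iso2.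
exact: (@final k a b c ha cn hanis _ _ _ _ _ _ _ _ ne nf E F).
Qed.
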